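(* Let $H(q,p)=\tfrac12\langle B(q)p,p\rangle+V(q)$ on $T^*\mathbb T^2$, $\mathbb T^2=(\mathbb R/2\pi\mathbb Z)^2$, with $B,V$ smooth and $2\pi$-periodic in $q_1,q_2$, $B$ symmetric positive definite, $V$ with a nondegenerate maximum at $q=0$, $V(0)=0$, and $\frac{\partial B}{\partial q_2}(q_1,0)=0$. Let $\gamma$ be a homoclinic orbit to $O=(0,0,0,0)$ contained (in the covering coordinates) in $\{q_2=0\}$ with $q_1$ increasing from $0$ to $2\pi$, given by $p_1=P_1(q_1)$, $p_2=P_2(q_1)$, $q_1\in(0,2\pi)$. Assume: for some $a>0,\delta>0$, the unstable manifold of $O$ is the graph $p=\nabla S^u(q)$ on $(-a,\pi+a)\times(-\delta,\delta)$ and the stable manifold of $O$ is the graph $p=\nabla S^s(q)$ on $(-\pi-a,a)\times(-\delta,\delta)$, with $S^u(0,0)=S^s(0,0)=0$. Let $\sigma=\int_0^{2\pi}P_1(q_1)\,dq_1$ and $\widehat S^s(q_1,q_2)=S^s(q_1-2\pi,q_2)+\sigma$ on $(\pi-a,2\pi+a)\times(-\delta,\delta)$. Let $S_0',S_1:\mathbb R\to\mathbb R$ be the $2\pi$-antiperiodic extensions of $P_1,P_2$ (i.e. $f(q_1+2\pi)=-f(q_1)$), and $S_0$ the primitive of $S_0'$ with $S_0(0)=0$. Let $T^u(q_1)=\frac{\partial^2S^u}{\partial q_2^2}(q_1,0)$ and $\widehat T^s(q_1)=\frac{\partial^2\widehat S^s}{\partial q_2^2}(q_1,0)$. If $H$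 is $\mathcal R$-reversible with respect to $\mathcal R(q,p)=(Rq,-Rp)$, $R=\mathrm{diag}(-1,r_2)$, $r_2\in\{\pm1\}$ (i.e. $X_H\circ\mathcal R=-\mathcal RX_H$), then $\widehat S^s(2\pi-q_1,r_2q_2)=-S^u(q_1,q_2)+\sigma$ for $(q_1,q_2)\in(\pi-a,\pi+a)\times(-\delta,\delta)$, and $S_0(2\pi-q_1)=-S_0(q_1)+\sigma$ and $S_1(2\pi-q_1)=-r_2S_1(q_1)$ for all $q_1\in\mathbb R$, and $\widehat T^s(2\pi-q_1)=-T^u(q_1)$ for $q_1\in(\pi-a,\pi+a)$.
   Context: Smooth means $C^r$, $r\ge2$, or analytic; $X_H$ is the Hamiltonian vector field for $dq\wedge dp$. The functions $S_0,S_1$ coincide with the coefficients of orders $0,1$ in $q_2$ of $S^u$ (and of $\widehat S^s$) on their domains. *)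

(* Defs.v *)
From Stdlib Require Import Reals ZArith.
From Coquelicot Require Import Coquelicot.
Open Scope R_scope.

(** Points of T*R^2 in covering coordinates: (q1,q2,p1,p2). *)
Record state := mkst { sq1 : R; sq2 : R; sp1 : R; sp2 : R }.

Definition pd1 (f : R -> R -> R) (x y : R) : R := Derive (fun t => f t y) x.
Definition pd2 (f : R -> R -> R) (x y : R) : R := Derive (fun t => f x t) y.

Definition uncurry2 (f : R -> R -> R) : R * R -> R := fun z => f (fst z) (snd z).

Definition C1_on (D : R -> R -> Prop) (f : R -> R -> R) : Prop :=
  forall x y, D x y ->
    ex_derive (fun t => f t y) x /\ ex_derive (fun t => f x t) y /\
    continuous (uncurry2 f) (x, y) /\
    continuous (uncurry2 (pd1 f)) (x, y) /\
    continuous (uncurry2 (pd2 f)) (x, y).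

Definition C2_on (D : R -> R -> Prop) (f : R -> R -> R) : Prop :=
  C1_on D f /\ C1_on D (pd1 f) /\ C1_on D (pd2 f).

Definition whole_plane : R -> R -> Prop := fun _ _ => True.

Definition periodic2 (f : R -> R -> R) : Prop :=
  forall x y, f (x + 2 * PI) y = f x y /\ f x (y + 2 * PI) = f x y.

Definition Ham (b11 b12 b22 V : R -> R -> R) (q1 q2 p1 p2 : R) : R :=
  / 2 * (b11 q1 q2 * p1 ^ 2 + 2 * b12 q1 q2 * p1 * p2 + b22 q1 q2 * p2 ^ 2)
  + V q1 q2.

Definition XH (H : R -> R -> R -> R -> R) (z : state) : state :=
  let '(mkst q1 q2 p1 p2) := z in
  mkst (Derive (fun s => H q1 q2 s p2) p1)
       (Derive (fun s => H q1 q2 p1 s) p2)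
       (- Derive (fun s => H s q2 p1 p2) q1)
       (- Derive (fun s => H q1 s p1 p2) q2).

(** The involution calR(q,p) = (Rq, -Rp), R = diag(-1, r2); it is linear,
    so it acts the same way on points and on vectors. *)
Definition calR (r2 : R) (z : state) : state :=
  mkst (- sq1 z) (r2 * sq2 z) (sp1 z) (- (r2 * sp2 z)).

Definition opp_state (z : state) : state :=
  mkst (- sq1 z) (- sq2 z) (- sp1 z) (- sp2 z).

Definition is_solution (H : R -> R -> R -> R -> R) (x : R -> state) : Prop :=
  forall t,
    is_derive (fun s => sq1 (x s)) t (sq1 (XH H (x t))) /\
    is_derive (fun s => sq2 (x s)) t (sq2 (XH H (x t))) /\
    is_derive (fun s => sp1 (x s)) t (sp1 (XH H (x t))) /\
    is_derive (fun s => sp2 (x s)) t (sp2 (XH H (x t))).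

Definition tends_to (x : R -> state) (l : Rbar) (w : state) : Prop :=
  is_lim (fun t => sq1 (x t)) l (sq1 w) /\
  is_lim (fun t => sq2 (x t)) l (sq2 w) /\
  is_lim (fun t => sp1 (x t)) l (sp1 w) /\
  is_lim (fun t => sp2 (x t)) l (sp2 w).

Definition origin : state := mkst 0 0 0 0.

Definition Wu (H : R -> R -> R -> R -> R) (w z : state) : Prop :=
  exists x : R -> state, is_solution H x /\ x 0 = z /\ tends_to x m_infty w.
Definition Ws (H : R -> R -> R -> R -> R) (w z : state) : Prop :=
  exists x : R -> state, is_solution H x /\ x 0 = z /\ tends_to x p_infty w.

Definition is_graph_over (W : state -> Prop) (D : R -> R -> Prop)
    (S : R -> R -> R) : Prop :=
  forall z, D (sq1 z) (sq2 z) ->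
    (W z <-> (sp1 z = pd1 S (sq1 z) (sq2 z) /\ sp2 z = pd2 S (sq1 z) (sq2 z))).

Definition box (a b c d : R) : R -> R -> Prop :=
  fun x y => a < x < b /\ c < y < d.

(** The 2*pi-antiperiodic extension (f(x + 2pi) = - f(x)) of a function given
    on (0, 2pi); at the points 2*pi*k we use the value 0 (the continuous
    extension, since P1, P2 tend to 0 at the endpoints). *)
Definition antiper_ext (f : R -> R) (x : R) : R :=
  let k := Int_part (x / (2 * PI)) in
  let y := x - 2 * PI * IZR k in
  if Req_EM_T y 0 then 0 else if Z.even k then f y else - f y.

(* Main.v *)
Require Import Defs.
From Stdlib Require Import Reals ZArith Lra.
From Coquelicot Require Import Coquelicot.
Open Scope R_scope.

Lemma scal_one_R (y : R) : scal 1 y = y.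
Proof. unfold scal; simpl; unfold mult; simpl; ring. Qed.

Lemma is_lim_shift (g : R -> R) (l : Rbar) (L : Rbar) (c : R) :
  (l = m_infty \/ l = p_infty) -> is_lim g l L -> is_lim (fun s => g (s + c)) l L.
Proof.
intros Hl Hg. apply (is_lim_comp g (fun s => s + c) l L l); auto.
- destruct Hl as [->| ->].
  + intros P [M HM]. exists (M - c). intros x Hx. apply HM. lra.
  + intros P [M HM]. exists (M - c). intros x Hx. apply HM. lra.
- destruct Hl as [->| ->]; exists 0; intros; discriminate.
Qed.

Lemma is_lim_opp_arg (g : R -> R) (L : Rbar) :
  is_lim g m_infty L -> is_lim (fun s => g (- s)) p_infty L.
Proof.
intros Hg. apply (is_lim_comp g (fun s => - s) p_infty L m_infty); auto.
- intros P [M HM]. exists (- M). intros x Hx. apply HM. lra.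
- exists 0; intros; discriminate.
Qed.

Lemma sol_shift H x c : is_solution H x -> is_solution H (fun s => x (s + c)).
Proof.
intros Hx t. destruct (Hx (t + c)) as (A1 & A2 & A3 & A4).
assert (Hd : is_derive (fun s => s + c) t 1).
{ auto_derive; auto; ring. }
split; [|split; [|split]].
- pose proof (is_derive_comp (fun s => sq1 (x s)) (fun s => s + c) t _ _ A1 Hd) as K.
  rewrite scal_one_R in K. exact K.
- pose proof (is_derive_comp (fun s => sq2 (x s)) (fun s => s + c) t _ _ A2 Hd) as K.
  rewrite scal_one_R in K. exact K.
- pose proof (is_derive_comp (fun s => sp1 (x s)) (fun s => s + c) t _ _ A3 Hd) as K.
  rewrite scal_one_R in K. exact K.
- pose proof (is_derive_comp (fun s => sp2 (x s)) (fun s => s + c) t _ _ A4 Hd) as K.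
  rewrite scal_one_R in K. exact K.
Qed.

Lemma tends_shift x l w c : (l = m_infty \/ l = p_infty) -> tends_to x l w -> tends_to (fun s => x (s + c)) l w.
Proof.
intros Hl (A1 & A2 & A3 & A4); repeat split; apply (is_lim_shift (fun s => _ (x s))); auto.
Qed.

Lemma is_derive_eqv (f : R -> R) (x l lp : R) : is_derive f x l -> @eq R l lp -> is_derive f x lp.
Proof. intros H E; subst; auto. Qed.

Lemma der_neg (f : R -> R) t l : is_derive f (- t) l -> is_derive (fun s => f (- s)) t (- l).
Proof.
intros Hf. assert (Hd : is_derive (fun s : R => - s) t (-1)) by (auto_derive; auto; ring).
pose proof (is_derive_comp f (fun s => - s) t _ _ Hf Hd) as K.
eapply is_derive_eqv; [exact K|]. unfold scal; simpl; unfold mult; simpl; ring.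
Qed.

Lemma der_scal (f : R -> R) t l k : is_derive f t l -> is_derive (fun s => k * f s) t (k * l).
Proof.
intros Hf. apply (is_derive_scal f t k l Hf).
Qed.

Lemma sol_rev H r2 x :
  (forall z, XH H (calR r2 z) = opp_state (calR r2 (XH H z))) ->
  is_solution H x -> is_solution H (fun t => calR r2 (x (- t))).
Proof.
intros Hrev Hx t. rewrite Hrev. destruct (Hx (- t)) as (A1 & A2 & A3 & A4).
simpl. split; [|split; [|split]].
- apply der_neg in A1. apply (is_derive_opp) in A1. eapply is_derive_eqv; [exact A1|].
  unfold opp; simpl; ring.
- apply der_neg in A2. apply (der_scal _ _ _ r2) in A2. eapply is_derive_eqv; [exact A2|]. simpl; ring.
- apply der_neg in A3. eapply is_derive_eqv; [exact A3|]. ring.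
- apply der_neg in A4. apply (der_scal _ _ _ r2) in A4. apply is_derive_opp in A4.
  eapply is_derive_eqv; [exact A4|]. unfold opp; simpl; ring.
Qed.

Lemma tends_rev r2 x : tends_to x m_infty origin -> tends_to (fun t => calR r2 (x (- t))) p_infty origin.
Proof.
intros (A1 & A2 & A3 & A4). simpl in *.
split; [|split; [|split]]; simpl.
- apply is_lim_opp_arg in A1. apply is_lim_opp in A1. simpl in A1.
  rewrite Ropp_0 in A1. exact A1.
- apply is_lim_opp_arg in A2. apply (is_lim_scal_l _ r2) in A2. simpl in A2.
  rewrite Rmult_0_r in A2. exact A2.
- apply is_lim_opp_arg in A3. exact A3.
- apply is_lim_opp_arg in A4. apply (is_lim_scal_l _ r2) in A4. apply is_lim_opp in A4. simpl in A4.
  rewrite Rmult_0_r, Ropp_0 in A4. exact A4.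
Qed.

Lemma XH_shift H (Hper : forall q1 q2 p1 p2, H (q1 + 2 * PI) q2 p1 p2 = H q1 q2 p1 p2) z :
  XH H (mkst (sq1 z - 2 * PI) (sq2 z) (sp1 z) (sp2 z)) = XH H z.
Proof.
destruct z as [q1 q2 p1 p2]; simpl.
assert (E : forall u v w, H (q1 - 2 * PI) u v w = H q1 u v w).
{ intros. rewrite <- (Hper (q1 - 2 * PI)). f_equal. ring. }
f_equal.
- apply Derive_ext. intros; apply E.
- apply Derive_ext. intros; apply E.
- f_equal. unfold Derive. f_equal. apply Lim_ext. intros h.
  rewrite <- (Hper (q1 - 2 * PI + h)). rewrite <- (Hper (q1 - 2 * PI)).
  replace (q1 - 2 * PI + h + 2 * PI) with (q1 + h) by ring.
  replace (q1 - 2 * PI + 2 * PI) with q1 by ring. reflexivity.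
- f_equal. apply Derive_ext. intros; apply E.
Qed.

Lemma sol_shiftq H (Hper : forall q1 q2 p1 p2, H (q1 + 2 * PI) q2 p1 p2 = H q1 q2 p1 p2) x :
  is_solution H x -> is_solution H (fun s => mkst (sq1 (x s) - 2 * PI) (sq2 (x s)) (sp1 (x s)) (sp2 (x s))).
Proof.
intros Hx t. rewrite (XH_shift H Hper). destruct (Hx t) as (A1 & A2 & A3 & A4). simpl.
split; [|split; [|split]]; auto.
pose proof (is_derive_minus (fun s => sq1 (x s)) (fun _ => 2 * PI) t _ 0 A1 (is_derive_const _ _)) as K.
eapply is_derive_eqv; [exact K|]. unfold minus, plus, opp; simpl; ring.
Qed.

Lemma Ham_per b11 b12 b22 V : periodic2 b11 -> periodic2 b12 -> periodic2 b22 -> periodic2 V ->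
  forall q1 q2 p1 p2, Ham b11 b12 b22 V (q1 + 2 * PI) q2 p1 p2 = Ham b11 b12 b22 V q1 q2 p1 p2.
Proof.
intros P1 P2 P3 P4 q1 q2 p1 p2. unfold Ham.
rewrite (proj1 (P1 q1 q2)), (proj1 (P2 q1 q2)), (proj1 (P3 q1 q2)), (proj1 (P4 q1 q2)). reflexivity.
Qed.

Lemma tends_shiftq x : tends_to x p_infty (mkst (2 * PI) 0 0 0) ->
  tends_to (fun s => mkst (sq1 (x s) - 2 * PI) (sq2 (x s)) (sp1 (x s)) (sp2 (x s))) p_infty origin.
Proof.
intros (A1 & A2 & A3 & A4); simpl in *. split; [|split; [|split]]; simpl; auto.
apply (is_lim_minus _ (fun _ => 2 * PI) p_infty (2 * PI) (2 * PI)); auto.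
- apply is_lim_const.
- unfold is_Rbar_minus, is_Rbar_plus; simpl. f_equal. f_equal. ring.
Qed.

Lemma Int_part_char r (k : Z) : IZR k <= r < IZR k + 1 -> Int_part r = k.
Proof. intros H. symmetry. apply Int_part_spec. lra. Qed.

Lemma twoPI_pos : 0 < 2 * PI.
Proof. pose proof PI_RGT_0; lra. Qed.

Lemma antiper_refl (g : R -> R) c :
  (forall y, 0 < y < 2 * PI -> g (2 * PI - y) = c * g y) ->
  forall x, antiper_ext g (2 * PI - x) = c * antiper_ext g x.
Proof.
intros Hg x. pose proof twoPI_pos as P. unfold antiper_ext.
set (k := Int_part (x / (2 * PI))).
assert (B : IZR k <= x / (2 * PI) < IZR k + 1).
{ destruct (base_Int_part (x / (2 * PI))). unfold k. lra. }
assert (B2 : 2 * PI * IZR k <= x < 2 * PI * IZR k + 2 * PI).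
{ destruct B as [B1 B3]. split.
  - apply (Rmult_le_compat_l (2 * PI)) in B1; [|lra]. field_simplify in B1; lra.
  - apply (Rmult_lt_compat_l (2 * PI)) in B3; [|lra]. field_simplify in B3; lra. }
destruct (Req_EM_T (x - 2 * PI * IZR k) 0) as [E|E].
- assert (K : Int_part ((2 * PI - x) / (2 * PI)) = (1 - k)%Z).
  { apply Int_part_char. rewrite minus_IZR.
    replace ((2 * PI - x) / (2 * PI)) with (1 - IZR k); [lra|].
    field_simplify; [|lra]. replace x with (2 * PI * IZR k) by lra. field. lra. }
  rewrite K. destruct (Req_EM_T (2 * PI - x - 2 * PI * IZR (1 - k)) 0) as [E2|E2]; [ring|].
  exfalso. apply E2. rewrite minus_IZR. lra.
- assert (K : Int_part ((2 * PI - x) / (2 * PI)) = (- k)%Z).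
  { apply Int_part_char. rewrite opp_IZR.
    assert (x <> 2 * PI * IZR k) by lra.
    split.
    + apply (Rmult_le_reg_l (2 * PI)); [lra|]. field_simplify; lra.
    + apply (Rmult_lt_reg_l (2 * PI)); [lra|]. field_simplify; lra. }
  rewrite K, opp_IZR.
  destruct (Req_EM_T (2 * PI - x - 2 * PI * - IZR k) 0) as [E2|E2]; [exfalso; lra|].
  rewrite Z.even_opp.
  replace (2 * PI - x - 2 * PI * - IZR k) with (2 * PI - (x - 2 * PI * IZR k)) by ring.
  rewrite Hg by lra. destruct (Z.even k); ring.
Qed.

Lemma antiper_shift (g : R -> R) (n : Z) u :
  antiper_ext g (u + 2 * PI * IZR n) = (if Z.even n then 1 else -1) * antiper_ext g u.
Proof.
pose proof twoPI_pos as P. unfold antiper_ext.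
assert (K : Int_part ((u + 2 * PI * IZR n) / (2 * PI)) = (Int_part (u / (2 * PI)) + n)%Z).
{ apply Int_part_char. rewrite plus_IZR. destruct (base_Int_part (u / (2 * PI))).
  replace ((u + 2 * PI * IZR n) / (2 * PI)) with (u / (2 * PI) + IZR n) by (field; lra). lra. }
rewrite K, plus_IZR.
replace (u + 2 * PI * IZR n - 2 * PI * (IZR (Int_part (u / (2 * PI))) + IZR n))
  with (u - 2 * PI * IZR (Int_part (u / (2 * PI)))) by ring.
destruct (Req_EM_T (u - 2 * PI * IZR (Int_part (u / (2 * PI)))) 0); [ring|].
rewrite Z.even_add.
destruct (Z.even (Int_part (u / (2 * PI)))), (Z.even n); simpl; ring.
Qed.

Lemma antiper_in (g : R -> R) y : 0 < y < 2 * PI -> antiper_ext g y = g y.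
Proof.
intros Hy. pose proof twoPI_pos as P. unfold antiper_ext.
assert (K : Int_part (y / (2 * PI)) = 0%Z).
{ apply Int_part_char. simpl. split.
  - apply Rlt_le. apply Rdiv_lt_0_compat; lra.
  - apply (Rmult_lt_reg_l (2 * PI)); [lra|]. field_simplify; lra. }
rewrite K. simpl. replace (y - 2 * PI * 0) with y by ring.
destruct (Req_EM_T y 0); [lra|]. reflexivity.
Qed.

Lemma antiper_0 (g : R -> R) : antiper_ext g 0 = 0.
Proof.
unfold antiper_ext. replace (0 / (2 * PI)) with 0 by (field; pose proof twoPI_pos; lra).
replace (Int_part 0) with 0%Z by (symmetry; apply Int_part_char; simpl; lra).
simpl. destruct (Req_EM_T (0 - 2 * PI * 0) 0); [reflexivity|]. exfalso; lra.
Qed.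

Lemma antiper_m (g : R -> R) y : -(2 * PI) < y < 0 -> antiper_ext g y = - g (y + 2 * PI).
Proof.
intros Hy. pose proof (antiper_shift g 1 y) as E. simpl in E.
rewrite Rmult_1_r, antiper_in in E by lra. lra.
Qed.

Lemma cont_slice (F : R -> R -> R) u v : continuous (uncurry2 F) (u, v) -> continuous (fun t => F t v) u.
Proof.
intros Hc. apply (continuous_comp_2 (fun t : R => t) (fun _ : R => v) F u).
- apply continuous_id.
- apply continuous_const.
- exact Hc.
Qed.

Lemma locally_R x (P : R -> Prop) : (exists e, 0 < e /\ forall y, Rabs (y - x) < e -> P y) -> locally x P.
Proof.
intros (e & He & HP). exists (mkposreal e He). intros y Hy. apply HP. exact Hy.
Qed.

Lemma antiper_cont (g h : R -> R) m :
  0 < m -> m <= 2 * PI ->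
  (forall x, 0 < x < 2 * PI -> continuous g x) ->
  (forall y, 0 < y < 2 * PI -> g (2 * PI - y) = g y) ->
  (forall y, 0 < y < m -> g y = h y) -> continuous h 0 -> h 0 = 0 ->
  forall x, continuous (antiper_ext g) x.
Proof.
intros Hm Hm2 Hgc Hsym Hgh Hh0 Hh00.
pose proof twoPI_pos as P.
assert (C0 : forall x0, 0 <= x0 < 2 * PI -> continuous (antiper_ext g) x0).
{ intros x0 Hx0. destruct (Req_dec x0 0) as [->|Hne].
  - apply continuity_pt_filterlim. apply continuity_pt_filterlim in Hh0.
    intros eps Heps. destruct (Hh0 eps Heps) as (alp & Halp & Hd).
    exists (Rmin alp m). split; [apply Rmin_glb_lt; auto|].
    intros x ((_ & Hx) & Hxd). unfold R_dist in *. simpl in *. unfold R_dist in *.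
    rewrite antiper_0. rewrite Rminus_0_r in *.
    assert (Ha1 : Rabs x < alp) by (eapply Rlt_le_trans; [exact Hxd| apply Rmin_l]).
    assert (Ha2 : Rabs x < m) by (eapply Rlt_le_trans; [exact Hxd| apply Rmin_r]).
    destruct (Rlt_dec 0 x) as [Hp|Hn].
    + rewrite Rabs_pos_eq in Ha1, Ha2 by lra.
      rewrite antiper_in by lra. rewrite Hgh by lra.
      specialize (Hd x). unfold D_x, no_cond, R_dist in Hd. rewrite Hh00, Rminus_0_r, Rminus_0_r in Hd.
      apply Hd. split; auto. rewrite Rabs_pos_eq; lra.
    + assert (x < 0) by (destruct (Req_dec x 0); [subst; exfalso; auto|lra]).
      rewrite Rabs_left in Ha1, Ha2 by lra.
      rewrite antiper_m by lra.
      replace (x + 2 * PI) with (2 * PI - (- x)) by ring. rewrite Hsym by lra.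
      rewrite Hgh by lra. rewrite Rabs_Ropp.
      specialize (Hd (- x)). unfold D_x, no_cond, R_dist in Hd. rewrite Hh00, Rminus_0_r, Rminus_0_r in Hd.
      apply Hd. split; [split; auto; lra|]. rewrite Rabs_pos_eq; lra.
  - apply (continuous_ext_loc _ g).
    + apply locally_R. exists (Rmin x0 (2 * PI - x0)). split.
      * apply Rmin_glb_lt; lra.
      * intros y Hy. assert (Hy1 : Rabs (y - x0) < x0) by (eapply Rlt_le_trans; [exact Hy|apply Rmin_l]).
        assert (Hy2 : Rabs (y - x0) < 2 * PI - x0) by (eapply Rlt_le_trans; [exact Hy|apply Rmin_r]).
        apply Rabs_def2 in Hy1. apply Rabs_def2 in Hy2.
        symmetry. apply antiper_in. lra.
    + apply Hgc. lra. }
intros x.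
set (n := Int_part (x / (2 * PI))).
destruct (base_Int_part (x / (2 * PI))) as [B1 B3]. fold n in B1, B3.
assert (B2 : 2 * PI * IZR n <= x < 2 * PI * IZR n + 2 * PI).
{ split.
  - apply (Rmult_le_compat_l (2 * PI)) in B1; [|lra]. field_simplify in B1; lra.
  - assert (B4 : x / (2 * PI) < IZR n + 1) by lra.
    apply (Rmult_lt_compat_l (2 * PI)) in B4; [|lra]. field_simplify in B4; lra. }
set (s := if Z.even n then 1 else -1).
apply (continuous_ext (fun u => scal s (antiper_ext g (u + - (2 * PI * IZR n))))).
- intros u. unfold scal; simpl; unfold mult; simpl. unfold s.
  rewrite <- (antiper_shift g n). f_equal. ring.
- apply (@continuous_scal_r R_UniformSpace R_AbsRing R_NormedModule s (fun u => antiper_ext g (u + - (2 * PI * IZR n))) x). apply (continuous_comp (fun u => u + - (2 * PI * IZR n)) (antiper_ext g)).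
  + apply (continuous_plus (fun u : R => u) (fun _ => - (2 * PI * IZR n))); [apply continuous_id|apply continuous_const].
  + apply C0. lra.
Qed.

Lemma RInt_neg (f : R -> R) a b : @ex_RInt R_CompleteNormedModule f a b ->
  @RInt R_CompleteNormedModule (fun y => - f y) a b = - @RInt R_CompleteNormedModule f a b.
Proof. intros E. apply (@RInt_opp R_CompleteNormedModule). exact E. Qed.

Lemma S0_lemma (f P1 : R -> R) :
  (forall x, continuous f x) -> (forall y, f (2 * PI - y) = f y) ->
  (forall y, 0 < y < 2 * PI -> f y = P1 y) ->
  forall x, RInt f 0 (2 * PI - x) = - RInt f 0 x + RInt P1 0 (2 * PI).
Proof.
intros Hc Hs Hp x.
assert (Ex : forall a b, @ex_RInt R_CompleteNormedModule f a b) by (intros; apply (@ex_RInt_continuous R_CompleteNormedModule); intros; apply Hc).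
pose proof (RInt_comp_lin f (-1) (2 * PI) x (2 * PI) (Ex _ _)) as K.
replace (-1 * x + 2 * PI) with (2 * PI - x) in K by ring.
replace (-1 * (2 * PI) + 2 * PI) with 0 in K by ring.
rewrite (RInt_ext _ (fun y => - f y)) in K.
2:{ intros y _. unfold scal; simpl; unfold mult; simpl. rewrite <- (Hs y). replace (-1 * y + 2 * PI) with (2 * PI - y) by ring. ring. }
rewrite RInt_neg in K by apply Ex.
rewrite <- (opp_RInt_swap f 0 (2 * PI - x)) in K by apply Ex.
pose proof (RInt_Chasles f 0 x (2 * PI) (Ex _ _) (Ex _ _)) as C.
rewrite (RInt_ext f P1 0 (2 * PI)) in C.
2:{ intros y Hy. rewrite Rmin_left, Rmax_right in Hy by (pose proof twoPI_pos; lra). apply Hp; lra. }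
unfold scal, plus, opp in *; simpl in *. unfold mult in *; simpl in *. lra.
Qed.

Lemma const_1d (g : R -> R) (lo hi : R) :
  (forall t, lo < t < hi -> is_derive g t 0) -> forall u v, lo < u < hi -> lo < v < hi -> g u = g v.
Proof.
intros Hd u v Hu Hv.
destruct (MVT_gen g v u (fun _ => 0)) as (c & _ & Hc).
- intros t Ht. apply Hd. split.
  + eapply Rle_lt_trans; [|apply Ht]. apply Rmin_glb; lra.
  + eapply Rlt_le_trans; [apply Ht|]. apply Rmax_lub; lra.
- intros t Ht. apply continuity_pt_filterlim. apply (@ex_derive_continuous R_AbsRing R_NormedModule). exists 0. apply Hd. split.
  + eapply Rlt_le_trans; [|apply Ht]. apply Rmin_glb_lt; lra.
  + eapply Rle_lt_trans; [apply Ht|]. apply Rmax_lub_lt; lra.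
- lra.
Qed.

Lemma const_2d (G : R -> R -> R) a1 b1 c1 d1 :
  a1 < 0 < b1 -> c1 < 0 < d1 ->
  (forall x y, a1 < x < b1 -> c1 < y < d1 -> is_derive (fun t => G t y) x 0 /\ is_derive (fun t => G x t) y 0) ->
  forall x y, a1 < x < b1 -> c1 < y < d1 -> G x y = G 0 0.
Proof.
intros H1 H2 Hd x y Hx Hy.
rewrite (const_1d (fun t => G x t) c1 d1) with (v := 0); try lra.
- apply (const_1d (fun t => G t 0) a1 b1); try lra. intros t Ht. apply (Hd t 0); lra.
- intros t Ht. apply (Hd x t); lra.
Qed.

Lemma lim_m_ev (f : R -> R) (l eps : R) : is_lim f m_infty l -> 0 < eps ->
  exists M, forall x, x < M -> Rabs (f x - l) < eps.
Proof. intros H He. apply is_lim_spec in H. exact (H (mkposreal eps He)). Qed.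

Lemma lim_p_ev (f : R -> R) (l eps : R) : is_lim f p_infty l -> 0 < eps ->
  exists M, forall x, M < x -> Rabs (f x - l) < eps.
Proof. intros H He. apply is_lim_spec in H. exact (H (mkposreal eps He)). Qed.

Lemma mono_bounds (q : R -> R) (lo hi : R) : (forall t s, t < s -> q t < q s) ->
  is_lim q m_infty lo -> is_lim q p_infty hi -> forall t, lo < q t < hi.
Proof.
intros Hm Hlo Hhi.
assert (A : forall s, lo <= q s).
{ intros s. destruct (Rle_dec lo (q s)) as [|Hn]; auto. exfalso.
  destruct (lim_m_ev q lo (lo - q s) Hlo) as (M & HM); [lra|].
  specialize (HM (Rmin M s - 1)). specialize (Hm (Rmin M s - 1) s).
  assert (Rmin M s <= M) by apply Rmin_l. assert (Rmin M s <= s) by apply Rmin_r.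
  assert (q (Rmin M s - 1) < q s) by (apply Hm; lra).
  assert (Rabs (q (Rmin M s - 1) - lo) < lo - q s) by (apply HM; lra).
  rewrite Rabs_left in H2 by lra. lra. }
assert (B : forall s, q s <= hi).
{ intros s. destruct (Rle_dec (q s) hi) as [|Hn]; auto. exfalso.
  destruct (lim_p_ev q hi (q s - hi) Hhi) as (M & HM); [lra|].
  specialize (HM (Rmax M s + 1)). specialize (Hm s (Rmax M s + 1)).
  assert (M <= Rmax M s) by apply Rmax_l. assert (s <= Rmax M s) by apply Rmax_r.
  assert (q s < q (Rmax M s + 1)) by (apply Hm; lra).
  assert (Rabs (q (Rmax M s + 1) - hi) < q s - hi) by (apply HM; lra).
  rewrite Rabs_right in H2 by lra. lra. }
intros t. split.
- specialize (A (t - 1)). specialize (Hm (t - 1) t). assert (q (t-1) < q t) by (apply Hm; lra). lra.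
- specialize (B (t + 1)). specialize (Hm t (t + 1)). assert (q t < q (t+1)) by (apply Hm; lra). lra.
Qed.

Lemma mono_surj (q : R -> R) (lo hi : R) : (forall t s, t < s -> q t < q s) ->
  (forall t, ex_derive q t) ->
  is_lim q m_infty lo -> is_lim q p_infty hi -> forall c, lo < c < hi -> exists t, q t = c.
Proof.
intros Hm Hd Hlo Hhi c Hc.
destruct (lim_m_ev q lo (c - lo) Hlo) as (M1 & H1); [lra|].
destruct (lim_p_ev q hi (hi - c) Hhi) as (M2 & H2); [lra|].
set (t1 := M1 - 1). set (t2 := Rmax (M2 + 1) (t1 + 1)).
assert (A1 : q t1 < c) by (specialize (H1 t1); unfold t1 in *; assert (Rabs (q (M1 - 1) - lo) < c - lo) by (apply H1; lra); apply Rabs_def2 in H; lra).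
assert (A2 : c < q t2).
{ assert (M2 + 1 <= t2) by apply Rmax_l.
  assert (Rabs (q t2 - hi) < hi - c) by (apply H2; lra). apply Rabs_def2 in H0; lra. }
assert (T : t1 < t2) by (assert (t1 + 1 <= t2) by apply Rmax_r; lra).
destruct (IVT (fun t => q t - c) t1 t2) as (z & _ & Hz).
- intros x. apply continuity_pt_minus; [|apply continuity_pt_const; intros u v; reflexivity].
  apply continuity_pt_filterlim. apply (@ex_derive_continuous R_AbsRing R_NormedModule). apply Hd.
- exact T.
- lra.
- lra.
- exists z. lra.
Qed.

Lemma Derive_plus_const (g : R -> R) c t : Derive (fun s => g s + c) t = Derive g t.
Proof. unfold Derive. f_equal. apply Lim_ext. intros h. f_equal. ring. Qed.

Lemma der_lin (f : R -> R) k t l : is_derive f (k * t) l -> is_derive (fun s => f (k * s)) t (k * l).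
Proof.
intros Hf. assert (Hd : is_derive (fun s : R => k * s) t k) by (auto_derive; auto; ring).
pose proof (is_derive_comp f (fun s => k * s) t _ _ Hf Hd) as K. exact K.
Qed.
Theorem proposition6
  (b11 b12 b22 Vpot : R -> R -> R)
  (* smoothness (C^2) and 2pi-periodicity of B and Vpot *)
  (Hb11 : C2_on whole_plane b11) (Hb12 : C2_on whole_plane b12)
  (Hb22 : C2_on whole_plane b22) (HV : C2_on whole_plane Vpot)
  (Pb11 : periodic2 b11) (Pb12 : periodic2 b12) (Pb22 : periodic2 b22)
  (PV : periodic2 Vpot)
  (* B symmetric (built in) positive definite *)
  (Bpos : forall x y, 0 < b11 x y /\ 0 < b11 x y * b22 x y - b12 x y ^ 2)
  (* Vpot has a nondegenerate maximum at 0, Vpot(0) = 0 *)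
  (Vmax : exists eps, 0 < eps /\
     forall x y, Rabs x < eps -> Rabs y < eps -> Vpot x y <= Vpot 0 0)
  (Vnondeg : pd1 (pd1 Vpot) 0 0 * pd2 (pd2 Vpot) 0 0 - pd2 (pd1 Vpot) 0 0 * pd1 (pd2 Vpot) 0 0 <> 0)
  (V0 : Vpot 0 0 = 0)
  (* dB/dq2 (q1, 0) = 0 *)
  (dB : forall x, pd2 b11 x 0 = 0 /\ pd2 b12 x 0 = 0 /\ pd2 b22 x 0 = 0)
  (* the homoclinic orbit gamma *)
  (P1 P2 : R -> R)
  (gamma : R -> state)
  (Hgsol : is_solution (Ham b11 b12 b22 Vpot) gamma)
  (Hgq2 : forall t, sq2 (gamma t) = 0)
  (Hginc : forall t s, t < s -> sq1 (gamma t) < sq1 (gamma s))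
  (Hgm : tends_to gamma m_infty origin)
  (Hgp : tends_to gamma p_infty (mkst (2 * PI) 0 0 0))
  (HgP : forall t, sp1 (gamma t) = P1 (sq1 (gamma t)) /\
                   sp2 (gamma t) = P2 (sq1 (gamma t)))
  (* graph description of the invariant manifolds *)
  (a delta : R) (Ha : 0 < a) (Hdelta : 0 < delta)
  (Su Ss : R -> R -> R)
  (HSu : C2_on (box (- a) (PI + a) (- delta) delta) Su)
  (HSs : C2_on (box (- PI - a) a (- delta) delta) Ss)
  (Hu : is_graph_over (Wu (Ham b11 b12 b22 Vpot) origin)
          (box (- a) (PI + a) (- delta) delta) Su)
  (Hs : is_graph_over (Ws (Ham b11 b12 b22 Vpot) origin)
          (box (- PI - a) a (- delta) delta) Ss)
  (Su0 : Su 0 0 = 0) (Ss0 : Ss 0 0 = 0)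
  (* reversibility *)
  (r2 : R) (Hr2 : r2 = 1 \/ r2 = -1)
  (Hrev : forall z, XH (Ham b11 b12 b22 Vpot) (calR r2 z)
                    = opp_state (calR r2 (XH (Ham b11 b12 b22 Vpot) z))) :
  let sigma := RInt P1 0 (2 * PI) in
  let Sshat := fun x y => Ss (x - 2 * PI) y + sigma in
  let S0' := antiper_ext P1 in
  let S0 := fun x => RInt S0' 0 x in
  let S1 := antiper_ext P2 in
  let Tu := fun x => pd2 (pd2 Su) x 0 in
  let Tshat := fun x => pd2 (pd2 Sshat) x 0 in
  (forall x y, PI - a < x < PI + a -> - delta < y < delta ->
     Sshat (2 * PI - x) (r2 * y) = - Su x y + sigma) /\
  (forall x, S0 (2 * PI - x) = - S0 x + sigma) /\
  (forall x, S1 (2 * PI - x) = - r2 * S1 x) /\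
  (forall x, PI - a < x < PI + a -> Tshat (2 * PI - x) = - Tu x).
Proof.
intros sigma Sshat S0' S0 S1 Tu Tshat.
set (Hm := Ham b11 b12 b22 Vpot).
pose proof twoPI_pos as P2pos. pose proof PI_RGT_0 as Ppos.
assert (Hper := Ham_per b11 b12 b22 Vpot Pb11 Pb12 Pb22 PV).
assert (r2sq : r2 * r2 = 1) by (destruct Hr2; subst; ring).
assert (r2b : forall y, - delta < y < delta -> - delta < r2 * y < delta) by (intros y Hy; destruct Hr2; subst; lra).
destruct HSu as [HSu1 [HSu2 HSu3]]. destruct HSs as [HSs1 [HSs2 HSs3]].
assert (Lgrad : forall q1 q2, - a < q1 < PI + a -> - delta < q2 < delta ->
  pd1 Ss (- q1) (r2 * q2) = pd1 Su q1 q2 /\ pd2 Ss (- q1) (r2 * q2) = - (r2 * pd2 Su q1 q2)).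
{ intros q1 q2 Hq1 Hq2.
  set (z := mkst q1 q2 (pd1 Su q1 q2) (pd2 Su q1 q2)).
  assert (Wz : Wu Hm origin z) by (apply (Hu z); [split; simpl; auto | simpl; auto]).
  destruct Wz as (x & Hxs & Hx0 & Hxt).
  assert (Wz' : Ws Hm origin (calR r2 z)).
  { exists (fun t => calR r2 (x (- t))). split; [|split].
    - apply sol_rev; auto.
    - rewrite Ropp_0, Hx0. reflexivity.
    - apply tends_rev; auto. }
  apply (Hs (calR r2 z)) in Wz'.
  - simpl in Wz'. destruct Wz' as [E1 E2]. split; [symmetry; exact E1|].
    lra.
  - simpl. split; [lra|]. apply r2b; auto. }
assert (LB : forall x y, - a < x < PI + a -> - delta < y < delta -> Ss (- x) (r2 * y) = - Su x y).
{ assert (G0 : forall x y, - a < x < PI + a -> - delta < y < delta ->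
     (fun u v => Ss (- u) (r2 * v) + Su u v) x y = (fun u v => Ss (- u) (r2 * v) + Su u v) 0 0).
  { apply const_2d; try lra.
    intros x y Hx Hy. split.
    - assert (D1 : is_derive (fun t => Ss t (r2 * y)) (- x) (pd1 Ss (- x) (r2 * y))).
      { apply Derive_correct. apply (HSs1 (- x) (r2 * y)). split; [lra|]. apply r2b; auto. }
      assert (D2 : is_derive (fun t => Su t y) x (pd1 Su x y)).
      { apply Derive_correct. apply (HSu1 x y). split; auto. }
      apply der_neg in D1.
      pose proof (is_derive_plus _ _ x _ _ D1 D2) as K.
      eapply is_derive_eqv; [exact K|]. simpl. unfold plus; simpl.
      rewrite (proj1 (Lgrad x y Hx Hy)). ring.
    - assert (D1 : is_derive (fun t => Ss (- x) t) (r2 * y) (pd2 Ss (- x) (r2 * y))).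
      { apply Derive_correct. apply (HSs1 (- x) (r2 * y)). split; [lra|]. apply r2b; auto. }
      assert (D2 : is_derive (fun t => Su x t) y (pd2 Su x y)).
      { apply Derive_correct. apply (HSu1 x y). split; auto. }
      apply der_lin in D1.
      pose proof (is_derive_plus _ _ y _ _ D1 D2) as K.
      eapply is_derive_eqv; [exact K|]. simpl. unfold plus; simpl.
      rewrite (proj2 (Lgrad x y Hx Hy)). replace (r2 * - (r2 * pd2 Su x y)) with (- (r2 * r2) * pd2 Su x y) by ring.
      rewrite r2sq. ring. }
  intros x y Hx Hy. specialize (G0 x y Hx Hy). simpl in G0.
  rewrite Ropp_0, Rmult_0_r, Ss0, Su0 in G0. lra. }
set (q := fun t => sq1 (gamma t)).
pose proof Hgm as (Gm1 & _ & Gm3 & _). pose proof Hgp as (Gp1 & _ & _ & _).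
simpl in Gm1, Gm3, Gp1.
assert (Qb : forall t, 0 < q t < 2 * PI).
{ apply (mono_bounds q 0 (2 * PI)); auto. }
assert (Qs : forall c, 0 < c < 2 * PI -> exists t, q t = c).
{ apply (mono_surj q 0 (2 * PI)); auto.
  intros t. exists (sq1 (XH (Ham b11 b12 b22 Vpot) (gamma t))). apply (Hgsol t). }
assert (C1 : forall t, Wu (Ham b11 b12 b22 Vpot) origin (gamma t)).
{ intros t. exists (fun s => gamma (s + t)). split; [|split].
  - apply sol_shift; auto.
  - rewrite Rplus_0_l; reflexivity.
  - apply tends_shift; [left; reflexivity|exact Hgm]. }
assert (C2 : forall t, Ws (Ham b11 b12 b22 Vpot) origin
    (mkst (q t - 2 * PI) 0 (sp1 (gamma t)) (sp2 (gamma t)))).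
{ intros t. exists (fun s => mkst (sq1 (gamma (s + t)) - 2 * PI) (sq2 (gamma (s + t))) (sp1 (gamma (s + t))) (sp2 (gamma (s + t)))).
  split; [|split].
  - apply (sol_shiftq _ Hper (fun s => gamma (s + t))). apply sol_shift; auto.
  - rewrite Rplus_0_l, Hgq2. reflexivity.
  - apply (tends_shiftq (fun s => gamma (s + t))). apply tends_shift; [right; reflexivity|exact Hgp]. }
assert (LPu : forall x, 0 < x -> x < PI + a -> x < 2 * PI -> P1 x = pd1 Su x 0 /\ P2 x = pd2 Su x 0).
{ intros x H1 H2 H3. destruct (Qs x) as (t & Ht); [lra|].
  pose proof (proj1 (Hu (gamma t) ltac:(rewrite Hgq2; split; [unfold q in Ht; lra| lra])) (C1 t)) as [E1 E2].
  destruct (HgP t) as [F1 F2]. unfold q in Ht. rewrite Ht, Hgq2 in *. split; congruence. }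
assert (LPs : forall x, 0 < x -> PI - a < x -> x < 2 * PI -> P1 x = pd1 Ss (x - 2 * PI) 0 /\ P2 x = pd2 Ss (x - 2 * PI) 0).
{ intros x H1 H2 H3. destruct (Qs x) as (t & Ht); [lra|].
  pose proof (proj1 (Hs (mkst (q t - 2 * PI) 0 (sp1 (gamma t)) (sp2 (gamma t))) ltac:(unfold box; simpl; rewrite Ht; split; lra)) (C2 t)) as [E1 E2].
  simpl in E1, E2. destruct (HgP t) as [F1 F2]. unfold q in Ht, E1, E2. rewrite Ht in *. split; congruence. }
assert (Lsym1 : forall x, 0 < x -> PI - a < x -> x < 2 * PI -> P1 x = P1 (2 * PI - x) /\ P2 x = - r2 * P2 (2 * PI - x)).
{ intros x H1 H2 H3. destruct (LPs x H1 H2 H3) as [E1 E2]. destruct (LPu (2 * PI - x)) as [F1 F2]; try lra.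
  destruct (Lgrad (2 * PI - x) 0) as [G1 G2]; try lra.
  replace (- (2 * PI - x)) with (x - 2 * PI) in G1, G2 by ring. rewrite Rmult_0_r in G1, G2.
  rewrite E1, E2, F1, F2, G1, G2. split; ring. }
assert (Lsym : forall y, 0 < y < 2 * PI -> P1 (2 * PI - y) = P1 y /\ P2 (2 * PI - y) = - r2 * P2 y).
{ intros y Hy. destruct (Rlt_dec (PI - a) y) as [Hl|Hl].
  - destruct (Lsym1 y) as [E1 E2]; try lra. split; [auto|]. rewrite E2.
    replace (- r2 * (- r2 * P2 (2 * PI - y))) with ((r2 * r2) * P2 (2 * PI - y)) by ring. rewrite r2sq; ring.
  - destruct (Lsym1 (2 * PI - y)) as [E1 E2]; try lra.
    replace (2 * PI - (2 * PI - y)) with y in E1, E2 by ring. auto. }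
set (h := fun t => pd1 Su t 0).
assert (hc : forall u, - a < u < PI + a -> continuous h u).
{ intros u Hu'. apply cont_slice. apply (HSu2 u 0). split; lra. }
assert (h0 : h 0 = 0).
{ assert (L1 : is_lim (fun t => h (q t)) m_infty (h 0)).
  { apply is_lim_comp_continuous; [exact Gm1|]. apply hc. lra. }
  assert (L2 : is_lim (fun t => h (q t)) m_infty 0).
  { apply (is_lim_ext_loc (fun t => sp1 (gamma t))); [|exact Gm3].
    destruct (lim_m_ev q 0 (Rmin (PI + a) (2 * PI)) Gm1) as (M & HM).
    { apply Rmin_glb_lt; lra. }
    exists M. intros t Ht. specialize (HM t Ht). rewrite Rminus_0_r in HM.
    assert (Hq : q t < Rmin (PI + a) (2 * PI)) by (apply Rabs_def2 in HM; lra).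
    assert (q t < PI + a) by (eapply Rlt_le_trans; [exact Hq|apply Rmin_l]).
    destruct (Qb t). destruct (HgP t) as [F1 _]. rewrite F1. unfold h. apply LPu; auto. }
  apply is_lim_unique in L1. apply is_lim_unique in L2. rewrite L1 in L2. injection L2; auto. }
assert (Pc : forall x, 0 < x < 2 * PI -> continuous P1 x).
{ intros x Hx. destruct (Rlt_dec x (PI + a)) as [Hl|Hl].
  - apply (continuous_ext_loc _ h).
    + apply locally_R. exists (Rmin x (Rmin (PI + a - x) (2 * PI - x))). split; [apply Rmin_glb_lt; [lra|apply Rmin_glb_lt; lra]|].
      intros y Hy. assert (Hy1 : Rabs (y - x) < x) by (eapply Rlt_le_trans; [exact Hy|apply Rmin_l]).
      assert (Hy0 : Rabs (y - x) < Rmin (PI + a - x) (2 * PI - x)) by (eapply Rlt_le_trans; [exact Hy|apply Rmin_r]).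
      assert (Hy2 : Rabs (y - x) < PI + a - x) by (eapply Rlt_le_trans; [exact Hy0|apply Rmin_l]).
      assert (Hy3 : Rabs (y - x) < 2 * PI - x) by (eapply Rlt_le_trans; [exact Hy0|apply Rmin_r]).
      apply Rabs_def2 in Hy1. apply Rabs_def2 in Hy2. apply Rabs_def2 in Hy3.
      symmetry. apply LPu; lra.
    + apply hc. lra.
  - apply (continuous_ext_loc _ (fun u => h (2 * PI - u))).
    + apply locally_R. exists (Rmin (x - (PI - a)) (2 * PI - x)). split; [apply Rmin_glb_lt; lra|].
      intros y Hy. assert (Hy1 : Rabs (y - x) < x - (PI - a)) by (eapply Rlt_le_trans; [exact Hy|apply Rmin_l]).
      assert (Hy2 : Rabs (y - x) < 2 * PI - x) by (eapply Rlt_le_trans; [exact Hy|apply Rmin_r]).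
      apply Rabs_def2 in Hy1. apply Rabs_def2 in Hy2.
      destruct (Lsym y) as [E _]; [lra|]. rewrite <- E. symmetry. apply LPu; lra.
    + apply (continuous_comp (fun u => 2 * PI - u) h).
      * apply (@ex_derive_continuous R_AbsRing R_NormedModule). auto_derive. auto.
      * apply hc. lra. }
split; [|split; [|split]].
- intros x y Hx Hy. unfold Sshat. replace (2 * PI - x - 2 * PI) with (- x) by ring.
  rewrite LB by lra. reflexivity.
- assert (fc : forall x, continuous S0' x).
  { unfold S0'. apply (antiper_cont P1 h (Rmin (PI + a) (2 * PI))).
    + apply Rmin_glb_lt; lra.
    + apply Rmin_r.
    + exact Pc.
    + intros y Hy. apply (Lsym y Hy).
    + intros y Hy. assert (y < PI + a) by (eapply Rlt_le_trans; [apply Hy|apply Rmin_l]).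
      assert (y < 2 * PI) by (eapply Rlt_le_trans; [apply Hy|apply Rmin_r]).
      apply LPu; lra.
    + apply hc; lra.
    + exact h0. }
  intros x. unfold S0, sigma. apply (S0_lemma S0' P1 fc).
  + intros y. unfold S0'. rewrite (antiper_refl P1 1); [ring|].
    intros z Hz. rewrite (proj1 (Lsym z Hz)). ring.
  + intros y Hy. unfold S0'. apply antiper_in; auto.
- intros x. unfold S1. apply antiper_refl. intros y Hy. apply (Lsym y Hy).
- intros x Hx. unfold Tshat, Tu. unfold pd2 at 1.
  rewrite (Derive_ext_loc (fun t => pd2 Sshat (2 * PI - x) t) (fun t => - (r2 * pd2 Su x (r2 * t)))).
  2:{ apply locally_R. exists delta. split; auto. intros t Ht. rewrite Rminus_0_r in Ht. apply Rabs_def2 in Ht.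
      unfold pd2 at 1. unfold Sshat. rewrite Derive_plus_const.
      replace (2 * PI - x - 2 * PI) with (- x) by ring.
      destruct (Lgrad x (r2 * t)) as [_ G2]; [lra|apply r2b; lra|].
      replace (r2 * (r2 * t)) with t in G2 by (replace (r2 * (r2 * t)) with ((r2 * r2) * t) by ring; rewrite r2sq; ring).
      exact G2. }
  apply is_derive_unique.
  assert (D : is_derive (fun t => pd2 Su x t) (r2 * 0) (pd2 (pd2 Su) x (r2 * 0))).
  { apply Derive_correct. apply (HSu3 x (r2 * 0)). split; [lra|]. rewrite Rmult_0_r; lra. }
  apply der_lin in D. apply (der_scal _ _ _ r2) in D. apply is_derive_opp in D.
  eapply is_derive_eqv; [exact D|]. rewrite Rmult_0_r. unfold opp; simpl.
  replace (r2 * (r2 * pd2 (pd2 Su) x 0)) with ((r2 * r2) * pd2 (pd2 Su) x 0) by ring. rewrite r2sq. ring.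
Qed.
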